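(* In the setting of the simple-region decomposition (split $\Gamma$ at the $y$-portals $\operatorname{portal}_y(v_{WNW}(H))$, $\operatorname{portal}_y(v_{ESE}(H))$ and at the nodes $v_{WNW}(H)$, $v_{ESE}(H)$ for every inner hole $H\in\mathcal H$), the number of gates, i.e. of nonempty sets of the form $R\cap P$ where $R$ is (the node set of) a resulting region and $P$ is one of the splitting portals, is at most $6|\mathcal H|$.
   Context: $G_\Delta$ is the infinite regular triangular grid graph (neighbour directions E, W, NNE, SSW, NNW, SSE; $y$-axis = NNE–SSW; WNW/ESE perpendicular to it). $\Gamma=(V,E)$ is a triangular grid graph (connected subgraph of $G_\Delta$ induced by a finite $V$) and $\mathcal H$ its set of inner holes (bounded connected components of the subgraph of $G_\Delta$ induced by $V_\Delta\setminus V$). The boundary of a hole $H$ is the set of nodes of $V$ adjacent to a node of $H$; $v_{WNW}(H)$ ($v_{ESE}(H)$) is the boundary node of $H$ extremal in direction WNW (ESE), ties broken NNE-most. A $y$-portal is a connected component of $(V,E_y)$ with $E_y$ the edges parallel to the $y$-axis. Splitting at a $y$-portal $P$ replaces each $p\in P$ by copies $p_W$ (adjacent to the $W$-copies of its neighbours on $P$ and to $p$'s neighbours in directions NNW, W) and $p_E$ (adjacent to the $E$-copies of its neighbours on $P$ and to $p$'s neighbours in directions SSE, E). Splitting at $v_{WNW}(H)$ (whose adjacent hole point lies in direction E or SSE) replaces $v_E$ by $v_E^N$ (neighbours of $v_E$ in directions NNE, E) and $v_E^S$ (neighbours of $v_E$ in directions SSW, SSE); splitting at $v_{ESE}(H)$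 (adjacent hole point in direction W or NNW) replaces $v_W$ by $v_W^S$ (neighbours in directions SSW, W) and $v_W^N$ (neighbours in directions NNE, NNW). The resulting regions are the grid-point sets underlying the connected components of the split graph. *)

(* Defs.v *)
From HB Require Import structures.
From mathcomp Require Import all_boot all_order all_algebra.
From mathcomp Require Import finmap.

Set Implicit Arguments.
Unset Strict Implicit.
Unset Printing Implicit Defensive.

Import Order.TTheory GRing.Theory Num.Theory.
Local Open Scope ring_scope.
Local Open Scope fset_scope.
Local Open Scope ring_scope.

(* Coordinates: a point (a,b) sits at a*E + b*NNE (unit vectors E, NNE). *)
Definition point := (int * int)%type.

Inductive dir := dE | dW | dNNE | dSSW | dNNW | dSSE.

Definition dvec (d : dir) : int * int :=
  match d with
  | dE => (1, 0) | dW => (-1, 0)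
  | dNNE => (0, 1) | dSSW => (0, -1)
  | dNNW => (-1, 1) | dSSE => (1, -1)
  end.

Definition opp_dir (d : dir) : dir :=
  match d with
  | dE => dW | dW => dE | dNNE => dSSW | dSSW => dNNE | dNNW => dSSE | dSSE => dNNW
  end.

Definition is_vertical (d : dir) : bool :=
  match d with dNNE | dSSW => true | _ => false end.

Definition nb (p : point) (d : dir) : point :=
  ((fst p) + (dvec d).1, (snd p) + (dvec d).2).

Definition adj (p q : point) : Prop := exists d, q = nb p d.
(* adjacency along an edge parallel to the y-axis (NNE--SSW) *)
Definition vadj (p q : point) : Prop := q = nb p dNNE \/ q = nb p dSSW.

Inductive reach {T : Type} (A : T -> Prop) (r : T -> T -> Prop) (x : T) : T -> Prop :=
  | reach_refl : A x -> reach A r x x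
  | reach_step y z : reach A r x y -> r y z -> A z -> reach A r x z.

Definition grid_connected (V : {fset point}) : Prop :=
  forall p q, p \in V -> q \in V -> reach (fun x => x \in V) adj p q.

(* H is an inner hole: a bounded (= finite) connected component of the
   subgraph of G_Delta induced by the complement of V *)
Definition is_hole (V H : {fset point}) : Prop :=
  [/\ H != fset0,
      (forall h, h \in H -> h \notin V),
      (forall h q, h \in H -> adj h q -> q \notin V -> q \in H) &
      (forall h h', h \in H -> h' \in H -> reach (fun x => x \in H) adj h h')].

Definition boundary (V H : {fset point}) (v : point) : Prop :=
  v \in V /\ exists2 h, h \in H & adj v h.

(* Extremal in direction WNW = minimal first coordinate (WNW is perpendicular
   to the y-axis); ties broken NNE-most = maximal second coordinate. *)
Definition is_vWNW (V H : {fset point}) (v : point) : Prop :=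
  boundary V H v /\
  forall u, boundary V H u -> (fst v) < (fst u) \/ ((fst v) = (fst u) /\ (snd u) <= (snd v)).

(* Extremal in direction ESE = maximal first coordinate; ties NNE-most. *)
Definition is_vESE (V H : {fset point}) (v : point) : Prop :=
  boundary V H v /\
  forall u, boundary V H u -> (fst u) < (fst v) \/ ((fst v) = (fst u) /\ (snd u) <= (snd v)).

(* p lies on the y-portal of v (component of v in (V, E_y)) *)
Definition portal (V : {fset point}) (v p : point) : Prop :=
  reach (fun x => x \in V) vadj v p.

Definition split_root (V : {fset point}) (Hs : {fset {fset point}}) (v : point) : Prop :=
  exists2 H, H \in Hs & (is_vWNW V H v \/ is_vESE V H v).

Definition in_split_portal V Hs (p : point) : Prop :=
  exists v, split_root V Hs v /\ portal V v p.

Definition is_WNW_node V (Hs : {fset {fset point}}) (p : point) : Prop :=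
  exists2 H, H \in Hs & is_vWNW V H p.
Definition is_ESE_node V (Hs : {fset {fset point}}) (p : point) : Prop :=
  exists2 H, H \in Hs & is_vESE V H p.

(* copies of a node in the split graph:
   Whole = unsplit node; TW/TE = p_W / p_E;
   TEN/TES = v_E^N / v_E^S; TWS/TWN = v_W^S / v_W^N *)
Inductive tag := Whole | TW | TE | TEN | TES | TWS | TWN.

(* directions in which a copy keeps the incident edges of the original node *)
Definition owns (t : tag) (d : dir) : bool :=
  match t, d with
  | Whole, _ => true
  | TW, (dNNE | dSSW | dNNW | dW) => true
  | TE, (dNNE | dSSW | dSSE | dE) => true
  | TEN, (dNNE | dE) => true
  | TES, (dSSW | dSSE) => true
  | TWS, (dSSW | dW) => true
  | TWN, (dNNE | dNNW) => true
  | _, _ => false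
  end.

(* side of a copy: portal edges connect W-copies to W-copies and
   E-copies to E-copies *)
Definition side (t : tag) : nat :=
  match t with
  | Whole => 0 | TW | TWS | TWN => 1 | TE | TEN | TES => 2
  end%N.

Definition valid_copy V Hs (c : point * tag) : Prop :=
  (fst c) \in V /\
  match (snd c) with
  | Whole => ~ in_split_portal V Hs (fst c)
  | TW => in_split_portal V Hs (fst c) /\ ~ is_ESE_node V Hs (fst c)
  | TWS | TWN => in_split_portal V Hs (fst c) /\ is_ESE_node V Hs (fst c)
  | TE => in_split_portal V Hs (fst c) /\ ~ is_WNW_node V Hs (fst c)
  | TEN | TES => in_split_portal V Hs (fst c) /\ is_WNW_node V Hs (fst c)
  end.

Definition split_edge V Hs (c c' : point * tag) : Prop :=
  valid_copy V Hs c /\ valid_copy V Hs c' /\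
  exists d, [/\ (fst c') = nb (fst c) d, owns (snd c) d, owns (snd c') (opp_dir d) &
                (is_vertical d -> side (snd c) = side (snd c'))].

(* grid points underlying the connected component (region) of copy c0 *)
Definition region_of V Hs (c0 : point * tag) (p : point) : Prop :=
  exists t, reach (valid_copy V Hs) (split_edge V Hs) c0 (p, t).

Definition is_gate V Hs (g : {fset point}) : Prop :=
  exists c0 v,
    [/\ valid_copy V Hs c0, split_root V Hs v, g != fset0 &
        forall p, p \in g <-> (region_of V Hs c0 p /\ portal V v p)].

(* Main.v *)
Require Import Defs.
From HB Require Import structures.
From mathcomp Require Import all_boot all_order all_algebra.
From mathcomp Require Import finmap zify.
From Stdlib Require Import ClassicalEpsilon Classical.
Local Open Scope fset_scope.
Import Order.TTheory GRing.Theory Num.Theory.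
Set Implicit Arguments.
Unset Strict Implicit.

Lemma reach_trans T (A : T -> Prop) r x y z :
  reach A r x y -> reach A r y z -> reach A r x z.
Proof. move=> Hxy Hyz; elim: Hyz => //= y' z' _ IH rz Az; exact: reach_step IH rz Az. Qed.

Lemma reach_endA T (A : T -> Prop) r x y : reach A r x y -> A x /\ A y.
Proof. elim=> [Ax|y0 z _ [Ax _] _ Az]; by split. Qed.

Lemma reach_sym T (A : T -> Prop) r x y : (forall a b, r a b -> r b a) ->
  reach A r x y -> reach A r y x.
Proof.
move=> rs; elim=> [Ax|y0 z Hxy IH ryz Az]; first exact: reach_refl.
have [_ Ay0] := reach_endA Hxy.
apply: reach_trans _ IH; exact: reach_step (reach_refl r Az) (rs _ _ ryz) Ay0.
Qed.

Lemma reach_mono T (A : T -> Prop) (r r' : T -> T -> Prop) x y :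
  (forall a b, r a b -> r' a b) -> reach A r x y -> reach A r' x y.
Proof.
move=> rr; elim=> [Ax|y0 z _ IH ryz Az]; first exact: reach_refl.
exact: reach_step IH (rr _ _ ryz) Az.
Qed.

Lemma pt_eq (p q : point) : p.1 = q.1 -> p.2 = q.2 -> p = q.
Proof. by case: p q => ? ? [? ?] /= -> ->. Qed.

Lemma nb_opp p d : nb (nb p d) (opp_dir d) = p.
Proof. case: p => a b; case: d; apply: pt_eq; rewrite /nb /=; lia. Qed.

Lemma split_edge_sym (V : {fset point}) (Hs : {fset {fset point}}) c c' : split_edge V Hs c c' -> split_edge V Hs c' c.
Proof.
case=> vc [vc' [d [e o1 o2 vs]]]; split=> //; split=> //.
exists (opp_dir d); split.
- by rewrite e nb_opp.
- done.
- by case: d {e o2 vs} o1.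
- by move=> hv; rewrite vs //; case: d {e o1 o2 vs} hv.
Qed.

Lemma vadj_sym p q : vadj p q -> vadj q p.
Proof. by case=> ->; [right|left]; rewrite ?(nb_opp p dNNE) ?(nb_opp p dSSW) /=. Qed.

Lemma reach_below (V : {fset point}) q : nb q dNNE \notin V ->
  forall p, @reach point (fun x : point => x \in V) vadj q p -> p.1 = q.1 /\ (p.2 <= q.2)%R.
Proof.
move=> nq p; elim=> [_|y z _ [e1 e2] [->|->] zV]; rewrite /nb /=.
- by split.
- have lt : (y.2 < q.2)%R.
    rewrite lt_neqAle e2 andbT; apply/eqP => e; move: zV.
    have -> : nb y dNNE = nb q dNNE by rewrite /nb e1 e.
    by rewrite (negbTE nq).
  split; lia.
- split; lia.
Qed.

Lemma portal_eq (V : {fset point}) v v' x y : portal V v x -> portal V v' x -> portal V v y -> portal V v' y.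
Proof.
move=> h h' hy; apply: reach_trans h' _; apply: reach_trans _ hy.
exact: reach_sym vadj_sym h.
Qed.

Lemma top_uniq (V : {fset point}) v q q' : portal V v q -> nb q dNNE \notin V ->
  portal V v q' -> nb q' dNNE \notin V -> q = q'.
Proof.
move=> h n h' n'.
have r1 : reach (fun x => x \in V) vadj q q'.
  apply: reach_trans (reach_sym vadj_sym h) h'.
have [a1 b1] := reach_below n r1.
have [a2 b2] := reach_below n' (reach_sym vadj_sym r1).
apply: pt_eq; lia.
Qed.

Lemma vWNW_uniq (V H : {fset point}) v v' : is_vWNW V H v -> is_vWNW V H v' -> v = v'.
Proof. case=> b h [b' h']; have := h _ b'; have := h' _ b; move=> ? ?; apply: pt_eq; lia. Qed.

Lemma vESE_uniq (V H : {fset point}) v v' : is_vESE V H v -> is_vESE V H v' -> v = v'.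
Proof. case=> b h [b' h']; have := h _ b'; have := h' _ b; move=> ? ?; apply: pt_eq; lia. Qed.

Definition up (V : {fset point}) (Hs : {fset {fset point}}) (c c' : point * Defs.tag) : Prop :=
  split_edge V Hs c c' /\ fst c' = nb (fst c) dNNE.

Lemma top_exists (V : {fset point}) Hs (M : int) : (forall z : point, z \in V -> (z.2 <= M)%R) ->
  forall (n : nat) c, valid_copy V Hs c -> (M < c.1.2 + n%:Z)%R ->
  exists x, reach (valid_copy V Hs) (up V Hs) c x /\ ~ (exists c', up V Hs x c').
Proof.
move=> HM; elim=> [|n IH] c vc lt.
- have := HM _ (proj1 vc); lia.
- case: (classic (exists c', up V Hs c c')) => [[c' uc]|nt]; last first.
    by exists c; split=> //; exact: reach_refl.
  have vc' := proj1 (proj2 (proj1 uc)).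
  have [|x [rx tx]] := IH c' vc'.
    have := HM _ (proj1 vc'); rewrite (proj2 uc) /nb /=; lia.
  exists x; split=> //; apply: reach_trans rx; exact: reach_step (reach_refl _ vc) uc vc'.
Qed.

Lemma bound_exists (V : {fset point}) : exists M : int, forall z : point, z \in V -> (z.2 <= M)%R.
Proof.
exists (Posz (\max_(z <- V) `|(z : point).2|%N)) => z zV.
have := @leq_bigmax_seq point (V : seq point) (fun _ => true) (fun z : point => `|z.2|%N) z zV (erefl true).
move=> h; apply: (@le_trans _ _ (Posz `|z.2|)); first lia.
by rewrite lez_nat.
Qed.

Lemma up_portal (V : {fset point}) Hs v c x : reach (valid_copy V Hs) (up V Hs) c x ->
  portal V v c.1 -> portal V v x.1.
Proof.
elim=> // y z _ IH [[_ [vz _]] e] Az /IH h.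
apply: reach_step h _ (proj1 vz); by left.
Qed.

Definition wtag (V : {fset point}) Hs q : Defs.tag :=
  if excluded_middle_informative (is_ESE_node V Hs q) then TWN else TW.
Definition etag (V : {fset point}) Hs q : Defs.tag :=
  if excluded_middle_informative (is_WNW_node V Hs q) then TEN else TE.

Lemma top_class (V : {fset point}) Hs v q tq :
  split_root V Hs v -> portal V v q -> valid_copy V Hs (q, tq) ->
  ~ (exists c', up V Hs (q, tq) c') ->
  (tq = TWS /\ is_ESE_node V Hs q) \/ (tq = TES /\ is_WNW_node V Hs q) \/
  (nb q dNNE \notin V /\ (tq = wtag V Hs q \/ tq = etag V Hs q)).
Proof.
move=> sv pq [qV vq] nt.
have sp : in_split_portal V Hs q by exists v.
case E: tq vq => [||||||] vq /=; rewrite ?E in nt.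
- by case: vq.
- right; right; split; last by left; rewrite /wtag; case: excluded_middle_informative => // h; case: vq.
  apply/negP => nV; apply: nt.
  have sp' : in_split_portal V Hs (nb q dNNE) by exists v; split=> //; apply: reach_step pq _ nV; left.
  case: (classic (is_ESE_node V Hs (nb q dNNE))) => h.
  + exists (nb q dNNE, TWS); split=> //; split; first by split.
    split; first by split.
    by exists dNNE.
  + exists (nb q dNNE, TW); split=> //; split; first by split.
    split; first by split.
    by exists dNNE.
- right; right; split; last by right; rewrite /etag; case: excluded_middle_informative => // h; case: vq.
  apply/negP => nV; apply: nt.
  have sp' : in_split_portal V Hs (nb q dNNE) by exists v; split=> //; apply: reach_step pq _ nV; left.
  case: (classic (is_WNW_node V Hs (nb q dNNE))) => h.
  + exists (nb q dNNE, TES); split=> //; split; first by split.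
    split; first by split.
    by exists dNNE.
  + exists (nb q dNNE, TE); split=> //; split; first by split.
    split; first by split.
    by exists dNNE.
- right; right; split; last by right; rewrite /etag; case: excluded_middle_informative => // h; case: vq.
  apply/negP => nV; apply: nt.
  have sp' : in_split_portal V Hs (nb q dNNE) by exists v; split=> //; apply: reach_step pq _ nV; left.
  case: (classic (is_WNW_node V Hs (nb q dNNE))) => h.
  + exists (nb q dNNE, TES); split=> //; split; first by split.
    split; first by split.
    by exists dNNE.
  + exists (nb q dNNE, TE); split=> //; split; first by split.
    split; first by split.
    by exists dNNE.
- by right; left; split=> //; case: vq.
- by left; split=> //; case: vq.
- right; right; split; last by left; rewrite /wtag; case: excluded_middle_informative => // h; case: vq.
  apply/negP => nV; apply: nt.
  have sp' : in_split_portal V Hs (nb q dNNE) by exists v; split=> //; apply: reach_step pq _ nV; left.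
  case: (classic (is_ESE_node V Hs (nb q dNNE))) => h.
  + exists (nb q dNNE, TWS); split=> //; split; first by split.
    split; first by split.
    by exists dNNE.
  + exists (nb q dNNE, TW); split=> //; split; first by split.
    split; first by split.
    by exists dNNE.
Qed.

Definition gate_data (V : {fset point}) Hs c0 v (g : {fset point}) : Prop :=
  [/\ valid_copy V Hs c0, split_root V Hs v &
      forall p, p \in g <-> (region_of V Hs c0 p /\ portal V v p)].

Definition Tgt (V : {fset point}) Hs (g : {fset point}) (x : point * Defs.tag) : Prop :=
  exists c0 v p t, [/\ gate_data V Hs c0 v g, p \in g,
    reach (valid_copy V Hs) (split_edge V Hs) c0 (p, t),
    reach (valid_copy V Hs) (up V Hs) (p, t) x & ~ (exists c', up V Hs x c')].

Lemma Tgt_exists (V : {fset point}) Hs g : is_gate V Hs g -> exists x, Tgt V Hs g x.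
Proof.
case=> c0 [v [vc0 sv gn gP]].
have [p pg] : exists p : point, p \in g by apply/fset0Pn.
have [[t rt] pp] := proj1 (gP p) pg.
have [M HM] := bound_exists V.
have vpt := proj2 (reach_endA rt).
have lt : (M < (p, t).1.2 + Posz (absz (M - p.2)%R).+1)%R by rewrite /=; lia.
have [x [rx tx]] := @top_exists V Hs M HM (absz (M - p.2)%R).+1 (p, t) vpt lt.
exists x, c0, v, p, t; split=> //.
Qed.

Lemma Tgt_inj (V : {fset point}) Hs g g' x : Tgt V Hs g x -> Tgt V Hs g' x -> g = g'.
Proof.
have key : forall g, Tgt V Hs g x -> exists c0 v, gate_data V Hs c0 v g /\
    reach (valid_copy V Hs) (split_edge V Hs) c0 x /\ portal V v x.1.
  move=> h [c0 [v [p [t [gd pg r1 r2 _]]]]]; exists c0, v; split=> //; split.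
  - apply: reach_trans r1 _; apply: reach_mono r2; by move=> a b [].
  - apply: (up_portal (v := v) r2); by case: gd => _ _ /(_ p) [/(_ pg) [_ ?] _].
move=> /key [c0 [v [[_ _ gP] [r pv]]]] /key [c0' [v' [[_ _ gP'] [r' pv']]]].
apply/fsetP => y; apply/idP/idP.
- move=> /gP [[t rt] py]; apply/gP'; split; last exact: portal_eq pv pv' py.
  exists t; apply: reach_trans r' _; apply: reach_trans _ rt.
  exact: reach_sym (@split_edge_sym V Hs) r.
- move=> /gP' [[t rt] py]; apply/gP; split; last exact: portal_eq pv' pv py.
  exists t; apply: reach_trans r _; apply: reach_trans _ rt.
  exact: reach_sym (@split_edge_sym V Hs) r'.
Qed.

Definition tagn (t : Defs.tag) : nat :=
  match t with Whole => 0 | TW => 1 | TE => 2 | TEN => 3 | TES => 4 | TWS => 5 | TWN => 6 end.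
Lemma tagn_inj : injective tagn. Proof. by case; case. Qed.
Definition enc (x : point * Defs.tag) : point * nat := (x.1, tagn x.2).
Lemma enc_inj : injective enc. Proof. by case=> p t [p' t'] [-> /tagn_inj ->]. Qed.

Definition ipt : inhabited point := inhabits (0%R, 0%R).
Definition wnw (V H : {fset point}) := epsilon ipt (is_vWNW V H).
Definition ese (V H : {fset point}) := epsilon ipt (is_vESE V H).
Definition topP (V : {fset point}) v := epsilon ipt (fun q => portal V v q /\ nb q dNNE \notin V).

Definition SH (V : {fset point}) Hs H : seq (point * nat) :=
  map enc [:: (wnw V H, TES); (ese V H, TWS);
    (topP V (wnw V H), wtag V Hs (topP V (wnw V H)));
    (topP V (wnw V H), etag V Hs (topP V (wnw V H)));
    (topP V (ese V H), wtag V Hs (topP V (ese V H)));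
    (topP V (ese V H), etag V Hs (topP V (ese V H)))].

Definition Tseq (V : {fset point}) (Hs : {fset {fset point}}) :=
  flatten [seq SH V Hs H | H <- Hs].

Lemma size_Tseq (V : {fset point}) (Hs : {fset {fset point}}) :
  size (Tseq V Hs) = (6 * #|` Hs|)%N.
Proof.
have gen : forall s : seq {fset point}, size (flatten [seq SH V Hs H | H <- s]) = (6 * size s)%N.
  elim=> [|H s IH] //=; rewrite IH; lia.
exact: gen.
Qed.

Lemma in_T (V : {fset point}) Hs H y : H \in Hs -> y \in SH V Hs H -> y \in Tseq V Hs.
Proof. move=> HH yS; apply/flattenP; exists (SH V Hs H) => //; exact: map_f. Qed.

Lemma Tgt_mem (V : {fset point}) Hs g x : Tgt V Hs g x -> enc x \in Tseq V Hs.
Proof.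
case=> c0 [v [p [t [[_ sv gP] pg r1 r2 tx]]]].
have pv : portal V v p by case: (proj1 (gP p) pg).
have px := up_portal (v := v) r2 pv.
have vx := proj2 (reach_endA r2).
case: x px vx tx {r2} => q tq px vx tx.
case: (top_class sv px vx tx) => [[-> [H' HH' hE]]|[[-> [H' HH' hW]]|[nV tqE]]].
- have e : ese V H' = q.
    exact: vESE_uniq (epsilon_spec ipt (is_vESE V H') (ex_intro _ q hE)) hE.
  apply: (in_T HH'); by rewrite /SH /= e !inE eqxx ?orbT.
- have e : wnw V H' = q.
    exact: vWNW_uniq (epsilon_spec ipt (is_vWNW V H') (ex_intro _ q hW)) hW.
  apply: (in_T HH'); by rewrite /SH /= e !inE eqxx ?orbT.
- have et : topP V v = q.
    have := epsilon_spec ipt (fun q => portal V v q /\ nb q dNNE \notin V) (ex_intro _ q (conj px nV)).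
    by case=> h1 h2; exact: top_uniq h1 h2 px nV.
  case: sv => H HH [hW|hE].
  + have e : wnw V H = v.
      exact: vWNW_uniq (epsilon_spec ipt (is_vWNW V H) (ex_intro _ v hW)) hW.
    apply: (in_T HH); rewrite /SH /= e et !inE.
    by case: tqE => ->; rewrite eqxx ?orbT.
  + have e : ese V H = v.
      exact: vESE_uniq (epsilon_spec ipt (is_vESE V H) (ex_intro _ v hE)) hE.
    apply: (in_T HH); rewrite /SH /= e et !inE.
    by case: tqE => ->; rewrite eqxx ?orbT.
Qed.

Definition fg (V : {fset point}) Hs g : point * Defs.tag :=
  epsilon (inhabits ((0%R, 0%R), Whole)) (Tgt V Hs g).

Unset Implicit Arguments.
Unset Strict Implicit.

Theorem mainTheorem6 (V : {fset point}) (Hs Gs : {fset {fset point}}) :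
  grid_connected V ->
  (forall H, H \in Hs <-> is_hole V H) ->
  (forall g, g \in Gs <-> is_gate V Hs g) ->
  (#|` Gs| <= 6 * #|` Hs|)%N.
Proof.
move=> _ _ HG.
have spec : forall g, g \in Gs -> Tgt V Hs g (fg V Hs g).
  move=> g /HG /Tgt_exists ex; exact: epsilon_spec.
rewrite -(size_Tseq V Hs).
have -> : #|` Gs| = size [seq enc (fg V Hs g) | g <- Gs] by rewrite size_map.
apply: uniq_leq_size.
- rewrite map_inj_in_uniq ?fset_uniq // => g g' gG g'G /enc_inj e.
  apply: Tgt_inj (spec g gG) _; rewrite e; exact: spec.
- move=> y /mapP [g gG ->]; exact: Tgt_mem (spec g gG).
Qed.
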